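(* Let $f:\mathbb{R}^2\to\mathbb{R}^2$ be a Topologically Anosov homeomorphism which is the time one map of a flow $(f_t)_{t\in\mathbb{R}}$ defined by a $C^1$ vector field on $\mathbb{R}^2$. Then the flow has no (non-stationary) periodic orbits and no finite connections.
   Context: A homeomorphism $f:\mathbb{R}^2\to\mathbb{R}^2$ is Topologically Anosov (TA) if: (i) there is a continuous strictly positive $\epsilon:\mathbb{R}^2\to\mathbb{R}$ such that for all $x\neq y$ there is $k\in\mathbb{Z}$ with $\|f^k(x)-f^k(y)\|>\epsilon(f^k(x))$; and (ii) for every continuous strictly positive $\epsilon$ there is a continuous strictly positive $\delta$ such that every $\delta$-pseudo-orbit is $\epsilon$-shadowed by an orbit. A $\delta$-pseudo-orbit is a sequence $(x_n)_{n\in\mathbb{Z}}$ with $\|f(x_n)-x_{n+1}\|<\delta(f(x_n))$; it is $\epsilon$-shadowed by the orbit of $x$ if $\|x_n-f^n(x)\|<\epsilon(x_n)$ for all $n$. A connection between singularities $x_1,x_2$ (not necessarily distinct) of the flow is an orbit of a point $x$ with $\alpha(x)=\{x_1\}$ and $\omega(x)=\{x_2\}$ (or vice versa); it is finite if $x_1,x_2\in\mathbb{R}^2$ (i.e. neither is the point at infinity of the extension of the flow to $\mathbb{S}^2=\mathbb{R}^2\cup\{\infty\}$). *)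

(* Defs.v *)
From Stdlib Require Import Reals ZArith.
From Coquelicot Require Import Coquelicot.
Open Scope R_scope.

Definition pt := (R * R)%type.

Definition edist (p q : pt) : R :=
  sqrt ((fst p - fst q) ^ 2 + (snd p - snd q) ^ 2).

Definition is_homeo (f g : pt -> pt) : Prop :=
  (forall p, continuous f p) /\ (forall p, continuous g p) /\
  (forall p, g (f p) = p) /\ (forall p, f (g p) = p).

Fixpoint iter_nat (h : pt -> pt) (n : nat) (x : pt) : pt :=
  match n with O => x | S m => h (iter_nat h m x) end.

Definition iterZ (f g : pt -> pt) (k : Z) (x : pt) : pt :=
  match k with
  | Z0 => x
  | Zpos p => iter_nat f (Pos.to_nat p) x
  | Zneg p => iter_nat g (Pos.to_nat p) x
  end.

Definition pos_cont (e : pt -> R) : Prop :=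
  (forall p, continuous e p) /\ (forall p, 0 < e p).

Definition TA (f : pt -> pt) : Prop :=
  exists g : pt -> pt, is_homeo f g /\
  (exists e : pt -> R, pos_cont e /\
     forall x y, x <> y ->
       exists k : Z, edist (iterZ f g k x) (iterZ f g k y) > e (iterZ f g k x)) /\
  (forall e : pt -> R, pos_cont e ->
     exists d : pt -> R, pos_cont d /\
       forall xs : Z -> pt,
         (forall n, edist (f (xs n)) (xs (n + 1)%Z) < d (f (xs n))) ->
         exists x, forall n, edist (xs n) (iterZ f g n x) < e (xs n)).

Definition C1_field (V : pt -> pt) : Prop :=
  forall c : pt -> R, (c = fst \/ c = snd) ->
    (forall x y, ex_derive (fun u => c (V (u, y))) x) /\
    (forall x y, ex_derive (fun v => c (V (x, v))) y) /\
    (forall p : pt, continuous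
       (fun q : pt => Derive (fun u => c (V (u, snd q))) (fst q)) p) /\
    (forall p : pt, continuous
       (fun q : pt => Derive (fun v => c (V (fst q, v))) (snd q)) p).

Definition is_flow_of (V : pt -> pt) (phi : R -> pt -> pt) : Prop :=
  (forall x, phi 0 x = x) /\
  (forall x t, is_derive (fun s => fst (phi s x)) t (fst (V (phi t x)))) /\
  (forall x t, is_derive (fun s => snd (phi s x)) t (snd (V (phi t x)))).

Definition singular (V : pt -> pt) (x : pt) : Prop := V x = (0, 0).

Definition omega_lim (phi : R -> pt -> pt) (x y : pt) : Prop :=
  forall eps T, 0 < eps -> exists t, T <= t /\ edist (phi t x) y < eps.

Definition alpha_lim (phi : R -> pt -> pt) (x y : pt) : Prop :=
  forall eps T, 0 < eps -> exists t, t <= T /\ edist (phi t x) y < eps.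

Definition finite_connection (V : pt -> pt) (phi : R -> pt -> pt) (x x1 x2 : pt) : Prop :=
  ~ singular V x /\ singular V x1 /\ singular V x2 /\
  (forall y, alpha_lim phi x y <-> y = x1) /\
  (forall y, omega_lim phi x y <-> y = x2).

(* Main.v *)
Require Import Defs.
From Stdlib Require Import Reals ZArith.
From Coquelicot Require Import Coquelicot.
From Stdlib Require Import Lra Lia Classical.
Open Scope R_scope.

Lemma cont_R2_eps (e : pt -> R) p : continuous e p ->
  forall eps, 0 < eps -> exists d, 0 < d /\ forall q, Rabs (fst q - fst p) < d ->
    Rabs (snd q - snd p) < d -> Rabs (e q - e p) < eps.
Proof.
  intros H eps Heps.
  assert (Hl : locally (e p) (fun y => Rabs (y - e p) < eps)).
  { exists (mkposreal eps Heps). intros y Hy. exact Hy. }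
  destruct (H _ Hl) as [d Hd].
  exists d. split. apply cond_pos. intros q H1 H2. apply (Hd q). split; assumption.
Qed.

Lemma cont_pt_intro f x : (forall eps, 0 < eps -> exists d, 0 < d /\
  forall y, Rabs (y - x) < d -> Rabs (f y - f x) < eps) -> continuity_pt f x.
Proof.
  intros H eps Heps. destruct (H eps Heps) as [d [Hd H']]. exists d; split; [lra|].
  intros y [_ Hy]. apply H'. exact Hy.
Qed.

Lemma cont_pt_elim f x : continuity_pt f x -> forall eps, 0 < eps -> exists d, 0 < d /\
  forall y, Rabs (y - x) < d -> Rabs (f y - f x) < eps.
Proof.
  intros H eps Heps. destruct (H eps Heps) as [d [Hd H']]. exists d; split; [lra|].
  intros y Hy. destruct (Req_dec y x) as [->|Hne].
  - unfold Rminus; rewrite Rplus_opp_r, Rabs_R0; lra.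
  - apply (H' y). split; [split; [exact I|auto]|exact Hy].
Qed.

Lemma ex_derive_cpt f x : ex_derive f x -> continuity_pt f x.
Proof. intros H. apply continuity_pt_filterlim. apply (ex_derive_continuous f x H). Qed.

Lemma comp_lip (h : pt -> R) :
  (forall x y, ex_derive (fun u => h (u, y)) x) ->
  (forall x y, ex_derive (fun v => h (x, v)) y) ->
  (forall p : pt, continuous (fun q : pt => Derive (fun u => h (u, snd q)) (fst q)) p) ->
  (forall p : pt, continuous (fun q : pt => Derive (fun v => h (fst q, v)) (snd q)) p) ->
  forall p : pt, exists r L, 0 < r /\ 0 <= L /\ forall a b : pt,
  Rabs (fst a - fst p) < r -> Rabs (snd a - snd p) < r ->
  Rabs (fst b - fst p) < r -> Rabs (snd b - snd p) < r ->
  Rabs (h a - h b) <= L * (Rabs (fst a - fst b) + Rabs (snd a - snd b)).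
Proof.
  intros Hx Hy C1 C2 p.
  destruct (cont_R2_eps _ p (C1 p) 1 Rlt_0_1) as [d1 [Hd1 D1]].
  destruct (cont_R2_eps _ p (C2 p) 1 Rlt_0_1) as [d2 [Hd2 D2]].
  set (A1 := Derive (fun u => h (u, snd p)) (fst p)) in *.
  set (A2 := Derive (fun v => h (fst p, v)) (snd p)) in *.
  exists (Rmin d1 d2), (Rabs A1 + Rabs A2 + 1).
  split; [apply Rmin_pos; auto|]. split; [pose proof (Rabs_pos A1); pose proof (Rabs_pos A2); lra|].
  intros [a1 a2] [b1 b2]; simpl; intros Ha1 Ha2 Hb1 Hb2.
  pose proof (Rmin_l d1 d2). pose proof (Rmin_r d1 d2).
  destruct (MVT_gen (fun u => h (u, a2)) b1 a1 (fun u => Derive (fun u => h (u, a2)) u)) as [c1 [Hc1 E1]].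
  { intros x _. apply Derive_correct. apply Hx. }
  { intros x _. apply ex_derive_cpt. apply Hx. }
  destruct (MVT_gen (fun v => h (b1, v)) b2 a2 (fun v => Derive (fun v => h (b1, v)) v)) as [c2 [Hc2 E2]].
  { intros x _. apply Derive_correct. apply Hy. }
  { intros x _. apply ex_derive_cpt. apply Hy. }
  simpl in E1, E2.
  assert (B1 : Rabs (Derive (fun u => h (u, a2)) c1) <= Rabs A1 + 1).
  { assert (Hc : Rabs (c1 - fst p) < d1).
    { revert Hc1. unfold Rmin, Rmax. destruct (Rle_dec b1 a1); intros [? ?];
      apply Rabs_def1; apply Rabs_def2 in Ha1; apply Rabs_def2 in Hb1; lra. }
    assert (Hq := D1 (c1, a2) Hc (ltac:(simpl; lra))). simpl in Hq.
    pose proof (Rabs_triang_inv (Derive (fun u => h (u, a2)) c1) A1). lra. }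
  assert (B2 : Rabs (Derive (fun v => h (b1, v)) c2) <= Rabs A2 + 1).
  { assert (Hc : Rabs (c2 - snd p) < d2).
    { revert Hc2. unfold Rmin, Rmax. destruct (Rle_dec b2 a2); intros [? ?];
      apply Rabs_def1; apply Rabs_def2 in Ha2; apply Rabs_def2 in Hb2; lra. }
    assert (Hq := D2 (b1, c2) (ltac:(simpl; lra)) Hc). simpl in Hq.
    pose proof (Rabs_triang_inv (Derive (fun v => h (b1, v)) c2) A2). lra. }
  replace (h (a1, a2) - h (b1, b2)) with ((h (a1, a2) - h (b1, a2)) + (h (b1, a2) - h (b1, b2))) by ring.
  rewrite E1, E2.
  eapply Rle_trans; [apply Rabs_triang|]. rewrite !Rabs_mult.
  pose proof (Rabs_pos (a1 - b1)). pose proof (Rabs_pos (a2 - b2)).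
  pose proof (Rabs_pos A1). pose proof (Rabs_pos A2).
  apply Rle_trans with ((Rabs A1 + 1) * Rabs (a1 - b1) + (Rabs A2 + 1) * Rabs (a2 - b2)).
  - apply Rplus_le_compat; apply Rmult_le_compat_r; auto.
  - nra.
Qed.

Definition LocLip (W : pt -> pt) := forall p : pt, exists r L, 0 < r /\ 0 <= L /\ forall a b : pt,
  Rabs (fst a - fst p) < r -> Rabs (snd a - snd p) < r ->
  Rabs (fst b - fst p) < r -> Rabs (snd b - snd p) < r ->
  Rabs (fst (W a) - fst (W b)) <= L * (Rabs (fst a - fst b) + Rabs (snd a - snd b)) /\
  Rabs (snd (W a) - snd (W b)) <= L * (Rabs (fst a - fst b) + Rabs (snd a - snd b)).

Lemma C1_loclip V : C1_field V -> LocLip V.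
Proof.
  intros HC p.
  destruct (HC fst (or_introl eq_refl)) as [A1 [A2 [A3 A4]]].
  destruct (HC snd (or_intror eq_refl)) as [B1 [B2 [B3 B4]]].
  destruct (comp_lip (fun q => fst (V q)) A1 A2 A3 A4 p) as [r1 [L1 [Hr1 [HL1 H1]]]].
  destruct (comp_lip (fun q => snd (V q)) B1 B2 B3 B4 p) as [r2 [L2 [Hr2 [HL2 H2]]]].
  exists (Rmin r1 r2), (Rmax L1 L2). pose proof (Rmin_l r1 r2). pose proof (Rmin_r r1 r2).
  pose proof (Rmax_l L1 L2). pose proof (Rmax_r L1 L2).
  split; [apply Rmin_pos; auto|]. split; [lra|].
  intros a b Ha1 Ha2 Hb1 Hb2.
  pose proof (Rabs_pos (fst a - fst b)). pose proof (Rabs_pos (snd a - snd b)).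
  split.
  - eapply Rle_trans; [apply H1; lra|]. apply Rmult_le_compat_r; lra.
  - eapply Rle_trans; [apply H2; lra|]. apply Rmult_le_compat_r; lra.
Qed.

Lemma loclip_opp W : LocLip W -> LocLip (fun q => (- fst (W q), - snd (W q))).
Proof.
  intros H p. destruct (H p) as [r [L [Hr [HL H']]]]. exists r, L. split; auto. split; auto.
  intros a b Ha1 Ha2 Hb1 Hb2. simpl. destruct (H' a b Ha1 Ha2 Hb1 Hb2) as [E1 E2].
  replace (- fst (W a) - - fst (W b)) with (- (fst (W a) - fst (W b))) by ring.
  replace (- snd (W a) - - snd (W b)) with (- (snd (W a) - snd (W b))) by ring.
  rewrite !Rabs_Ropp. auto.
Qed.

Definition sol (W : pt -> pt) (g : R -> pt) := forall t,
  is_derive (fun s => fst (g s)) t (fst (W (g t))) /\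
  is_derive (fun s => snd (g s)) t (snd (W (g t))).

Lemma pt_eq (a b : pt) : fst a = fst b -> snd a = snd b -> a = b.
Proof. destruct a, b; simpl; intros; subst; auto. Qed.

Lemma sol_cont1 W g : sol W g -> forall t, continuity_pt (fun s => fst (g s)) t.
Proof. intros H t. apply ex_derive_cpt. eexists. apply (H t). Qed.
Lemma sol_cont2 W g : sol W g -> forall t, continuity_pt (fun s => snd (g s)) t.
Proof. intros H t. apply ex_derive_cpt. eexists. apply (H t). Qed.

Lemma zero_left_limit (D : R -> R) t0 tau : t0 < tau -> continuity_pt D tau ->
  (forall u, t0 <= u < tau -> D u = 0) -> D tau = 0.
Proof.
  intros Hlt Hc Hz. destruct (Req_dec (D tau) 0) as [|Hne]; auto.
  destruct (cont_pt_elim D tau Hc (Rabs (D tau)) (Rabs_pos_lt _ Hne)) as [d [Hd Hd']].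
  set (u := Rmax t0 (tau - d/2)).
  assert (Hu1 : t0 <= u) by apply Rmax_l.
  assert (Hu2 : u < tau) by (unfold u, Rmax; destruct (Rle_dec t0 (tau - d/2)); lra).
  assert (Hu3 : Rabs (u - tau) < d).
  { rewrite Rabs_left by lra. unfold u, Rmax; destruct (Rle_dec t0 (tau - d/2)); lra. }
  specialize (Hd' u Hu3). rewrite Hz in Hd' by lra.
  replace (0 - D tau) with (- D tau) in Hd' by ring. rewrite Rabs_Ropp in Hd'. lra.
Qed.

Lemma local_step W g d tau : LocLip W -> sol W g -> sol W d -> g tau = d tau ->
  exists h, 0 < h /\ forall u, tau <= u <= tau + h -> g u = d u.
Proof.
  intros HL Hg Hd Heq.
  destruct (HL (g tau)) as [r [L [Hr [HL0 HLip]]]].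
  destruct (cont_pt_elim _ _ (sol_cont1 W g Hg tau) r Hr) as [h1 [Hh1 G1]].
  destruct (cont_pt_elim _ _ (sol_cont2 W g Hg tau) r Hr) as [h2 [Hh2 G2]].
  destruct (cont_pt_elim _ _ (sol_cont1 W d Hd tau) r Hr) as [h3 [Hh3 G3]].
  destruct (cont_pt_elim _ _ (sol_cont2 W d Hd tau) r Hr) as [h4 [Hh4 G4]].
  rewrite <- Heq in G3, G4.
  set (h := Rmin (Rmin (Rmin h1 h2) (Rmin h3 h4)) (1 / (4 * (L + 1))) / 2).
  assert (Hh : 0 < h).
  { unfold h. apply Rdiv_lt_0_compat; [|lra]. repeat apply Rmin_pos; auto. apply Rdiv_lt_0_compat; lra. }
  assert (hle : h < h1 /\ h < h2 /\ h < h3 /\ h < h4 /\ h <= 1 / (4 * (L + 1))).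
  { unfold h. pose proof (Rmin_l (Rmin (Rmin h1 h2) (Rmin h3 h4)) (1 / (4 * (L + 1)))).
    pose proof (Rmin_r (Rmin (Rmin h1 h2) (Rmin h3 h4)) (1 / (4 * (L + 1)))).
    pose proof (Rmin_l (Rmin h1 h2) (Rmin h3 h4)). pose proof (Rmin_r (Rmin h1 h2) (Rmin h3 h4)).
    pose proof (Rmin_l h1 h2). pose proof (Rmin_r h1 h2).
    pose proof (Rmin_l h3 h4). pose proof (Rmin_r h3 h4). unfold h in Hh. lra. }
  destruct hle as [hl1 [hl2 [hl3 [hl4 hl5]]]].
  assert (hL : L * h <= 1/4).
  { apply Rle_trans with (L * (1 / (4 * (L + 1)))).
    - apply Rmult_le_compat_l; lra.
    - unfold Rdiv. rewrite Rmult_1_l. rewrite Rinv_mult.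
      apply Rle_trans with ((L + 1) * / 4 * / (L + 1)).
      + assert (0 < / (L+1)) by (apply Rinv_0_lt_compat; lra).
        assert (0 < /4) by (apply Rinv_0_lt_compat; lra). nra.
      + rewrite (Rmult_comm (L+1)), Rmult_assoc, Rinv_r by lra. lra. }
  set (m := fun u => Rabs (fst (g u) - fst (d u)) + Rabs (snd (g u) - snd (d u))).
  assert (Box : forall u, tau <= u <= tau + h ->
     Rabs (fst (g u) - fst (g tau)) < r /\ Rabs (snd (g u) - snd (g tau)) < r /\
     Rabs (fst (d u) - fst (g tau)) < r /\ Rabs (snd (d u) - snd (g tau)) < r).
  { intros u Hu. assert (Hu' : Rabs (u - tau) <= h) by (rewrite Rabs_right; lra).
    repeat split; [apply G1|apply G2|apply G3|apply G4]; lra. }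
  assert (Hmc : forall c, continuity_pt m c).
  { intros c. unfold m. apply continuity_pt_plus; apply continuity_pt_comp with (f2 := Rabs);
    try apply Rcontinuity_abs; apply continuity_pt_minus;
    eauto using sol_cont1, sol_cont2. }
  destruct (continuity_ab_maj m tau (tau + h) ltac:(lra) (fun c _ => Hmc c)) as [c [Hmax Hc]].
  assert (Hbound : forall xi, tau <= xi <= tau + h ->
    Rabs (fst (W (g xi)) - fst (W (d xi))) <= L * m c /\
    Rabs (snd (W (g xi)) - snd (W (d xi))) <= L * m c).
  { intros xi Hxi. destruct (Box xi Hxi) as [b1 [b2 [b3 b4]]].
    destruct (HLip (g xi) (d xi) b1 b2 b3 b4) as [E1 E2].
    specialize (Hmax xi Hxi). fold (m xi) in E1, E2. split; eapply Rle_trans; eauto;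
    apply Rmult_le_compat_l; auto. }
  assert (Hmc0 : 0 <= m c) by (unfold m; pose proof (Rabs_pos (fst (g c) - fst (d c)));
    pose proof (Rabs_pos (snd (g c) - snd (d c))); lra).
  assert (K1 : Rabs (fst (g c) - fst (d c)) <= L * m c * h).
  { destruct (MVT_gen (fun u => fst (g u) - fst (d u)) tau c
      (fun u => fst (W (g u)) - fst (W (d u)))) as [xi [Hxi E]].
    { intros x _. apply @is_derive_minus; [apply Hg|apply Hd]. }
    { intros x _. apply continuity_pt_minus; eauto using sol_cont1. }
    simpl in E. rewrite Heq in E. replace (fst (d tau) - fst (d tau)) with 0 in E by ring.
    rewrite Rminus_0_r in E. rewrite E, Rabs_mult.
    unfold Rmin, Rmax in Hxi; destruct (Rle_dec tau c); [|lra].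
    destruct (Hbound xi ltac:(lra)) as [B _].
    rewrite (Rabs_right (c - tau)) by lra. apply Rmult_le_compat; auto using Rabs_pos; lra. }
  assert (K2 : Rabs (snd (g c) - snd (d c)) <= L * m c * h).
  { destruct (MVT_gen (fun u => snd (g u) - snd (d u)) tau c
      (fun u => snd (W (g u)) - snd (W (d u)))) as [xi [Hxi E]].
    { intros x _. apply @is_derive_minus; [apply Hg|apply Hd]. }
    { intros x _. apply continuity_pt_minus; eauto using sol_cont2. }
    simpl in E. rewrite Heq in E. replace (snd (d tau) - snd (d tau)) with 0 in E by ring.
    rewrite Rminus_0_r in E. rewrite E, Rabs_mult.
    unfold Rmin, Rmax in Hxi; destruct (Rle_dec tau c); [|lra].
    destruct (Hbound xi ltac:(lra)) as [_ B].
    rewrite (Rabs_right (c - tau)) by lra. apply Rmult_le_compat; auto using Rabs_pos; lra. }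
  assert (Hm0 : m c <= 0).
  { assert (m c <= 2 * (L * h) * m c) by (unfold m at 1; lra). nra. }
  exists h. split; auto. intros u Hu. specialize (Hmax u Hu).
  unfold m in Hmax. pose proof (Rabs_pos (fst (g u) - fst (d u))).
  pose proof (Rabs_pos (snd (g u) - snd (d u))).
  assert (Z1 : Rabs (fst (g u) - fst (d u)) = 0) by (unfold m in Hm0; lra).
  assert (Z2 : Rabs (snd (g u) - snd (d u)) = 0) by (unfold m in Hm0; lra).
  apply pt_eq.
  - destruct (Req_dec (fst (g u)) (fst (d u))); auto. exfalso.
    apply Rabs_no_R0 in Z1; auto. lra.
  - destruct (Req_dec (snd (g u)) (snd (d u))); auto. exfalso.
    apply Rabs_no_R0 in Z2; auto. lra.
Qed.

Lemma uniq_fwd W g d t0 : LocLip W -> sol W g -> sol W d -> g t0 = d t0 ->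
  forall t, t0 <= t -> g t = d t.
Proof.
  intros HL Hg Hd H0 t1 Ht1. apply NNPP. intros Hne.
  set (E := fun t => t0 <= t <= t1 /\ forall u, t0 <= u <= t -> g u = d u).
  assert (Eb : bound E) by (exists t1; intros x [[_ Hx] _]; exact Hx).
  assert (Ee : exists x, E x).
  { exists t0. split; [lra|]. intros u Hu. replace u with t0 by lra. auto. }
  destruct (completeness E Eb Ee) as [tau [Hub Hlub]].
  assert (Ht0 : t0 <= tau) by (apply Hub; destruct Ee; unfold E; split; [lra|];
    intros u Hu; replace u with t0 by lra; auto).
  assert (Ht1' : tau <= t1) by (apply Hlub; intros x [[_ Hx] _]; exact Hx).
  assert (C1 : forall u, t0 <= u < tau -> g u = d u).
  { intros u Hu. apply NNPP. intros Hgu.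
    assert (tau <= u); [|lra]. apply Hlub. intros x [[Hx1 Hx2] Hx3].
    destruct (Rle_dec x u) as [|Hxu]; auto. exfalso. apply Hgu, Hx3. lra. }
  assert (C2 : g tau = d tau).
  { destruct (Req_dec t0 tau) as [<-|Hlt]; auto.
    apply pt_eq; apply Rminus_diag_uniq.
    - apply (zero_left_limit (fun u => fst (g u) - fst (d u)) t0); [lra| |].
      + apply continuity_pt_minus; eauto using sol_cont1.
      + intros u Hu. rewrite (C1 u Hu). ring.
    - apply (zero_left_limit (fun u => snd (g u) - snd (d u)) t0); [lra| |].
      + apply continuity_pt_minus; eauto using sol_cont2.
      + intros u Hu. rewrite (C1 u Hu). ring. }
  destruct (Req_dec tau t1) as [<-|Hlt]; [contradiction|].
  destruct (local_step W g d tau HL Hg Hd C2) as [h [Hh Hloc]].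
  assert (Hin : E (Rmin (tau + h) t1)).
  { split. { unfold Rmin; destruct Rle_dec; lra. }
    intros u Hu. destruct (Rlt_dec u tau) as [Hut|Hut].
    - apply C1; lra.
    - apply Hloc. unfold Rmin in Hu; destruct Rle_dec in Hu; lra. }
  specialize (Hub _ Hin). unfold Rmin in Hub; destruct Rle_dec in Hub; lra.
Qed.

Lemma sol_rev W g : sol W g -> sol (fun q => (- fst (W q), - snd (W q))) (fun t => g (- t)).
Proof.
  intros H t. simpl.
  assert (Hm : is_derive (fun v : R => - v) t (-1)).
  { apply is_derive_Reals. replace (-1) with (-(1)) by ring. apply derivable_pt_lim_opp, derivable_pt_lim_id. }
  destruct (H (- t)) as [H1 H2].
  split.
  - pose proof (is_derive_comp (fun u => fst (g u)) (fun v => - v) t _ _ H1 Hm) as K.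
    simpl in K. replace (- fst (W (g (- t)))) with (scal (-1) (fst (W (g (- t))))).
    exact K. unfold scal; simpl; unfold mult; simpl; ring.
  - pose proof (is_derive_comp (fun u => snd (g u)) (fun v => - v) t _ _ H2 Hm) as K.
    simpl in K. replace (- snd (W (g (- t)))) with (scal (-1) (snd (W (g (- t))))).
    exact K. unfold scal; simpl; unfold mult; simpl; ring.
Qed.

Lemma uniq_all W g d t0 : LocLip W -> sol W g -> sol W d -> g t0 = d t0 ->
  forall t, g t = d t.
Proof.
  intros HL Hg Hd H0 t. destruct (Rle_dec t0 t).
  - eapply uniq_fwd; eauto.
  - pose proof (uniq_fwd _ _ _ (- t0) (loclip_opp W HL) (sol_rev W g Hg) (sol_rev W d Hd)) as K.
    simpl in K. rewrite Ropp_involutive in K. specialize (K H0 (- t) ltac:(lra)).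
    rewrite Ropp_involutive in K. exact K.
Qed.

Lemma flow_sol V phi x : is_flow_of V phi -> sol V (fun t => phi t x).
Proof. intros [_ [H1 H2]] t. split; [apply H1|apply H2]. Qed.

Lemma flow_group V phi : C1_field V -> is_flow_of V phi ->
  forall s x t, phi t (phi s x) = phi (t + s) x.
Proof.
  intros HC HF s x. apply (uniq_all V _ _ 0 (C1_loclip V HC)).
  - apply flow_sol; auto.
  - intros t. destruct (flow_sol V phi x HF (t + s)) as [H1 H2].
    assert (Hm : is_derive (fun v : R => v + s) t 1).
    { apply is_derive_Reals. replace 1 with (1 + 0) by ring.
      apply derivable_pt_lim_plus; [apply derivable_pt_lim_id|apply derivable_pt_lim_const]. }
    split.
    + pose proof (is_derive_comp (fun u => fst (phi u x)) (fun v => v + s) t _ _ H1 Hm) as K.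
      simpl in K. replace (fst (V (phi (t + s) x))) with (scal 1 (fst (V (phi (t + s) x)))).
      exact K. unfold scal; simpl; unfold mult; simpl; ring.
    + pose proof (is_derive_comp (fun u => snd (phi u x)) (fun v => v + s) t _ _ H2 Hm) as K.
      simpl in K. replace (snd (V (phi (t + s) x))) with (scal 1 (snd (V (phi (t + s) x)))).
      exact K. unfold scal; simpl; unfold mult; simpl; ring.
  - destruct HF as [H0 _]. rewrite H0. f_equal. ring.
Qed.

Lemma iterZ_flow f g V phi : C1_field V -> is_flow_of V phi -> (forall x, f x = phi 1 x) ->
  (forall p, g (f p) = p) ->
  forall k x, iterZ f g k x = phi (IZR k) x.
Proof.
  intros HC HF Hf Hg.
  pose proof (flow_group V phi HC HF) as Hgrp.
  assert (Hp : forall n x, Defs.iter_nat f n x = phi (INR n) x).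
  { induction n; intros x.
    - simpl. destruct HF as [H0 _]. rewrite H0. reflexivity.
    - change (Defs.iter_nat f (S n) x) with (f (Defs.iter_nat f n x)). rewrite IHn, Hf, Hgrp. f_equal. rewrite (S_INR n). ring. }
  assert (Hgs : forall t x, g (phi t x) = phi (t - 1) x).
  { intros t x. replace (phi t x) with (f (phi (t - 1) x)).
    - apply Hg.
    - rewrite Hf, Hgrp. f_equal. ring. }
  assert (Hn : forall n x, Defs.iter_nat g n x = phi (- INR n) x).
  { induction n; intros x.
    - simpl. destruct HF as [H0 _]. rewrite Ropp_0, H0. reflexivity.
    - change (Defs.iter_nat g (S n) x) with (g (Defs.iter_nat g n x)). rewrite IHn, Hgs. f_equal. rewrite (S_INR n). ring. }
  intros k x. destruct k; simpl.
  - destruct HF as [H0 _]. rewrite H0. reflexivity.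
  - rewrite Hp. f_equal. rewrite INR_IZR_INZ, positive_nat_Z. reflexivity.
  - rewrite Hn. f_equal. rewrite INR_IZR_INZ, positive_nat_Z. rewrite <- Ropp_Ropp_IZR. reflexivity.
Qed.

Lemma edist_le_sum p q : edist p q <= Rabs (fst p - fst q) + Rabs (snd p - snd q).
Proof.
  unfold edist. set (a := fst p - fst q). set (b := snd p - snd q).
  rewrite <- (sqrt_pow2 (Rabs a + Rabs b)) by (pose proof (Rabs_pos a); pose proof (Rabs_pos b); lra).
  apply sqrt_le_1_alt.
  assert (a ^ 2 = Rabs a ^ 2) by (rewrite RPow_abs, Rabs_right; [reflexivity|apply Rle_ge; apply pow2_ge_0]).
  assert (b ^ 2 = Rabs b ^ 2) by (rewrite RPow_abs, Rabs_right; [reflexivity|apply Rle_ge; apply pow2_ge_0]).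
  pose proof (Rabs_pos a); pose proof (Rabs_pos b). nra.
Qed.

Lemma edist_ge1 p q : Rabs (fst p - fst q) <= edist p q.
Proof.
  unfold edist. rewrite <- (sqrt_pow2 (Rabs (fst p - fst q))) by apply Rabs_pos. apply sqrt_le_1_alt.
  rewrite RPow_abs, Rabs_right by (apply Rle_ge; apply pow2_ge_0).
  pose proof (pow2_ge_0 (snd p - snd q)). lra.
Qed.

Lemma edist_ge2 p q : Rabs (snd p - snd q) <= edist p q.
Proof.
  unfold edist. rewrite <- (sqrt_pow2 (Rabs (snd p - snd q))) by apply Rabs_pos. apply sqrt_le_1_alt.
  rewrite RPow_abs, Rabs_right by (apply Rle_ge; apply pow2_ge_0).
  pose proof (pow2_ge_0 (fst p - fst q)). lra.
Qed.

Lemma edist_cont (g : R -> pt) z :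
  (forall t, continuity_pt (fun s => fst (g s)) t) ->
  (forall t, continuity_pt (fun s => snd (g s)) t) ->
  forall t, continuity_pt (fun s => edist (g s) z) t.
Proof.
  intros C1 C2 t. unfold edist.
  apply continuity_pt_comp with (f2 := sqrt).
  - apply continuity_pt_plus; apply continuity_pt_comp with (f2 := fun x => x ^ 2);
    try (apply derivable_continuous_pt; apply derivable_pt_pow);
    apply continuity_pt_minus; auto; apply continuity_pt_const; intros ? ?; reflexivity.
  - apply continuity_pt_sqrt. pose proof (pow2_ge_0 (fst (g t) - fst z));
    pose proof (pow2_ge_0 (snd (g t) - snd z)); lra.
Qed.

Lemma comp_cont (e : pt -> R) (g : R -> pt) :
  (forall p, continuous e p) ->
  (forall t, continuity_pt (fun s => fst (g s)) t) ->
  (forall t, continuity_pt (fun s => snd (g s)) t) ->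
  forall t, continuity_pt (fun s => e (g s)) t.
Proof.
  intros He C1 C2 t. apply cont_pt_intro. intros eps Heps.
  destruct (cont_R2_eps e (g t) (He _) eps Heps) as [d [Hd Hd']].
  destruct (cont_pt_elim _ _ (C1 t) d Hd) as [d1 [Hd1 E1]].
  destruct (cont_pt_elim _ _ (C2 t) d Hd) as [d2 [Hd2 E2]].
  exists (Rmin d1 d2). split; [apply Rmin_pos; auto|]. intros y Hy.
  pose proof (Rmin_l d1 d2); pose proof (Rmin_r d1 d2).
  apply Hd'; [apply E1|apply E2]; lra.
Qed.

Definition om (g : R -> pt) (y : pt) := forall eps T, 0 < eps -> exists t, T <= t /\ edist (g t) y < eps.

Lemma Rabs_def2b a b : Rabs a <= b -> - b <= a <= b.
Proof. intros H. pose proof (Rle_abs a). pose proof (Rle_abs (- a)). rewrite Rabs_Ropp in *. lra. Qed.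

Lemma not_freq_ev (P : R -> Prop) : ~ (forall T, exists t, T <= t /\ P t) ->
  exists T0, forall t, T0 <= t -> ~ P t.
Proof.
  intros H. apply NNPP. intros H'. apply H. intros T. apply NNPP. intros H2.
  apply H'. exists T. intros t Ht Pt. apply H2. exists t. auto.
Qed.

Lemma conv_lemma (g : R -> pt) z :
  (forall t, continuity_pt (fun s => fst (g s)) t) ->
  (forall t, continuity_pt (fun s => snd (g s)) t) ->
  (forall y, om g y <-> y = z) ->
  forall eps, 0 < eps -> exists T, forall t, T <= t -> edist (g t) z < eps.
Proof.
  intros C1 C2 Hom eps0 Heps0. apply NNPP. intros Hn.
  assert (Hfar : forall T, exists t, T <= t /\ eps0 <= edist (g t) z).
  { intros T. apply NNPP. intros H. apply Hn. exists T. intros t Ht.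
    apply Rnot_le_lt. intros H'. apply H. exists t. auto. }
  set (r := eps0 / 2). assert (Hr : 0 < r) by (unfold r; lra).
  set (H := fun t => edist (g t) z = r).
  assert (Hdc : continuity (fun s => edist (g s) z)) by (intros t; apply edist_cont; auto).
  assert (Freq : forall T, exists t, T <= t /\ H t).
  { intros T. destruct (proj2 (Hom z) eq_refl r T Hr) as [t1 [Ht1 Hd1]].
    destruct (Hfar (t1 + 1)) as [t2 [Ht2 Hd2]].
    destruct (IVT (fun s => edist (g s) z - r) t1 t2) as [t [Ht Hft]].
    - apply continuity_minus; auto. apply continuity_const. intros ? ?; reflexivity.
    - lra.
    - simpl; lra.
    - simpl. unfold r in *; lra.
    - exists t. split; [lra|]. unfold H. simpl in Hft. lra. }
  assert (HB1 : forall t, H t -> Rabs (fst (g t) - fst z) <= r).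
  { intros t Ht. rewrite <- Ht. apply edist_ge1. }
  assert (HB2 : forall t, H t -> Rabs (snd (g t) - snd z) <= r).
  { intros t Ht. rewrite <- Ht. apply edist_ge2. }
  set (A := fun a => forall T, exists t, T <= t /\ H t /\ a <= fst (g t)).
  assert (Ab : bound A).
  { exists (fst z + r). intros a Ha. destruct (Ha 0) as [t [_ [Ht Hat]]].
    specialize (HB1 t Ht). apply Rabs_def2b in HB1. lra. }
  assert (Ae : exists a, A a).
  { exists (fst z - r). intros T. destruct (Freq T) as [t [Ht Ht']]. exists t.
    repeat split; auto. specialize (HB1 t Ht'). apply Rabs_def2b in HB1. lra. }
  destruct (completeness A Ab Ae) as [astar [Aub Alub]].
  assert (A1 : forall d T, 0 < d -> exists t, T <= t /\ H t /\ Rabs (fst (g t) - astar) < d).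
  { intros d T Hd.
    assert (Ha : exists a, A a /\ astar - d < a).
    { apply NNPP. intros Hc. assert (astar <= astar - d); [|lra].
      apply Alub. intros a Ha. apply Rnot_lt_le. intros Hlt. apply Hc. exists a; auto. }
    destruct Ha as [a [Ha Hla]].
    assert (Hnot : ~ A (astar + d)) by (intros Hc; specialize (Aub _ Hc); lra).
    destruct (not_freq_ev (fun t => H t /\ astar + d <= fst (g t))) as [T0 HT0].
    { intros Hc. apply Hnot. intros T'. destruct (Hc T') as [t [? [? ?]]]. exists t. auto. }
    destruct (Ha (Rmax T T0)) as [t [Ht [Ht' Hat]]].
    pose proof (Rmax_l T T0); pose proof (Rmax_r T T0).
    exists t. split; [lra|]. split; auto.
    assert (fst (g t) < astar + d).
    { apply Rnot_le_lt. intros Hc. apply (HT0 t); [lra|]. auto. }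
    apply Rabs_def1; lra. }
  set (B := fun b => forall d T, 0 < d -> exists t, T <= t /\ H t /\
            Rabs (fst (g t) - astar) < d /\ b <= snd (g t)).
  assert (Bb : bound B).
  { exists (snd z + r). intros b Hb. destruct (Hb 1 0 Rlt_0_1) as [t [_ [Ht [_ Hbt]]]].
    specialize (HB2 t Ht). apply Rabs_def2b in HB2. lra. }
  assert (Be : exists b, B b).
  { exists (snd z - r). intros d T Hd. destruct (A1 d T Hd) as [t [Ht [Ht' Ht'']]]. exists t.
    repeat split; auto. specialize (HB2 t Ht'). apply Rabs_def2b in HB2. lra. }
  destruct (completeness B Bb Be) as [bstar [Bub Blub]].
  assert (B1 : forall d T, 0 < d -> exists t, T <= t /\ H t /\ Rabs (fst (g t) - astar) < d /\
                 Rabs (snd (g t) - bstar) < d).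
  { intros d T Hd.
    assert (Hb : exists b, B b /\ bstar - d < b).
    { apply NNPP. intros Hc. assert (bstar <= bstar - d); [|lra].
      apply Blub. intros b Hb. apply Rnot_lt_le. intros Hlt. apply Hc. exists b; auto. }
    destruct Hb as [b [Hb Hlb]].
    assert (Hnot : ~ B (bstar + d)) by (intros Hc; specialize (Bub _ Hc); lra).
    assert (Hex : exists d0 T0, 0 < d0 /\ forall t, T0 <= t -> H t ->
               Rabs (fst (g t) - astar) < d0 -> snd (g t) < bstar + d).
    { apply NNPP. intros Hc. apply Hnot. intros d0 T0 Hd0. apply NNPP. intros Hc2.
      apply Hc. exists d0, T0. split; auto. intros t Ht Ht' Ht''. apply Rnot_le_lt.
      intros Hle. apply Hc2. exists t. auto. }
    destruct Hex as [d0 [T0 [Hd0 HT0]]].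
    destruct (Hb (Rmin d d0) (Rmax T T0) (Rmin_pos _ _ Hd Hd0)) as [t [Ht [Ht' [Ht'' Hbt]]]].
    pose proof (Rmax_l T T0); pose proof (Rmax_r T T0).
    pose proof (Rmin_l d d0); pose proof (Rmin_r d d0).
    exists t. split; [lra|]. split; auto. split; [lra|].
    assert (snd (g t) < bstar + d) by (apply HT0; auto; lra).
    apply Rabs_def1; lra. }
  assert (Hy : om g (astar, bstar)).
  { intros e T He. destruct (B1 (e / 2) T ltac:(lra)) as [t [Ht [_ [E1 E2]]]].
    exists t. split; auto. eapply Rle_lt_trans; [apply edist_le_sum|]. simpl. lra. }
  apply Hom in Hy.
  destruct (B1 (r / 2) 0 ltac:(lra)) as [t [_ [Ht [E1 E2]]]].
  pose proof (edist_le_sum (g t) (astar, bstar)) as K. simpl in K. rewrite Hy in K. unfold H in Ht. lra.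
Qed.

Lemma key f g V phi e x0 m sg : C1_field V -> is_flow_of V phi -> (forall x, f x = phi 1 x) ->
  (forall p, g (f p) = p) ->
  (forall x y, x <> y -> exists k : Z, edist (iterZ f g k x) (iterZ f g k y) > e (iterZ f g k x)) ->
  ~ singular V x0 -> 0 < m -> (forall t, m <= e (phi t x0)) -> 0 < sg ->
  (forall t s, 0 < s < sg -> edist (phi t x0) (phi (t + s) x0) < m) -> False.
Proof.
  intros HC HF Hf Hg Hexp Hns Hm He Hsg Hcl.
  assert (Hs : exists s, 0 < s < sg /\ phi s x0 <> x0).
  { apply NNPP. intros Hc. apply Hns.
    assert (Hconst : forall s, 0 < s < sg -> phi s x0 = x0).
    { intros s Hs. apply NNPP. intros Hne. apply Hc. exists s. auto. }
    destruct HF as [H0 [H1 H2]].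
    assert (Z : forall (c : R -> R) l, is_derive c 0 l -> (forall s, 0 < s < sg -> c s = c 0) -> l = 0).
    { intros c l Hd Hcs. apply is_derive_Reals in Hd.
      destruct (Req_dec l 0) as [|Hl]; auto. exfalso.
      destruct (Hd (Rabs l) (Rabs_pos_lt _ Hl)) as [dl Hdl].
      set (h := Rmin dl sg / 2).
      assert (Hh : 0 < h) by (unfold h; apply Rdiv_lt_0_compat; [apply Rmin_pos; [apply cond_pos|auto]|lra]).
      assert (Hh2 : h < Rmin dl sg) by (unfold h; pose proof (Rmin_pos dl sg (cond_pos dl) Hsg); lra).
      pose proof (Rmin_l dl sg); pose proof (Rmin_r dl sg).
      specialize (Hdl h ltac:(lra) ltac:(rewrite Rabs_right; lra)).
      rewrite Rplus_0_l, Hcs in Hdl by lra. unfold Rminus in Hdl. rewrite Rplus_opp_r in Hdl.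
      unfold Rdiv in Hdl. rewrite Rmult_0_l, Rplus_0_l, Rabs_Ropp in Hdl. lra. }
    unfold singular. apply pt_eq; simpl.
    - apply (Z (fun s => fst (phi s x0))). { pose proof (H1 x0 0) as K; rewrite H0 in K; exact K. }
      intros s Hs. rewrite Hconst, H0; auto.
    - apply (Z (fun s => snd (phi s x0))). { pose proof (H2 x0 0) as K; rewrite H0 in K; exact K. }
      intros s Hs. rewrite Hconst, H0; auto. }
  destruct Hs as [s [Hs Hne]].
  destruct (Hexp x0 (phi s x0) (not_eq_sym Hne)) as [k Hk].
  rewrite !(iterZ_flow f g V phi HC HF Hf Hg) in Hk.
  rewrite (flow_group V phi HC HF) in Hk.
  assert (E0 : phi 0 x0 = x0) by apply HF.
  rewrite <- E0 in Hk at 1 3. rewrite (flow_group V phi HC HF), Rplus_0_r in Hk.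
  replace (s + IZR k) with (IZR k + s) in Hk by ring. specialize (Hcl (IZR k) s Hs). specialize (He (IZR k)). lra.
Qed.

Lemma periodic_ok V phi e x0 T : C1_field V -> is_flow_of V phi -> pos_cont e -> 0 < T ->
  phi T x0 = x0 -> exists m sg, 0 < m /\ (forall t, m <= e (phi t x0)) /\ 0 < sg /\
  forall t s, 0 < s < sg -> edist (phi t x0) (phi (t + s) x0) < m.
Proof.
  intros HC HF [Hec Hep] HT HP.
  pose proof (flow_group V phi HC HF) as Hgrp.
  pose proof (flow_sol V phi x0 HF) as Hsol.
  pose proof (sol_cont1 _ _ Hsol) as C1. pose proof (sol_cont2 _ _ Hsol) as C2.
  simpl in C1, C2.
  assert (Per : forall u, phi (u + T) x0 = phi u x0).
  { intros u. rewrite <- Hgrp, HP. reflexivity. }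
  assert (PerN : forall n u, phi (u + INR n * T) x0 = phi u x0).
  { induction n; intros u. - simpl. f_equal. ring.
    - rewrite S_INR. replace (u + (INR n + 1) * T) with ((u + INR n * T) + T) by ring.
      rewrite Per. apply IHn. }
  assert (PerZ : forall k u, phi (u + IZR k * T) x0 = phi u x0).
  { intros k u. destruct (Z_le_gt_dec 0 k) as [Hk|Hk].
    - destruct (Z_of_nat_complete k Hk) as [n ->]. rewrite <- INR_IZR_INZ. apply PerN.
    - assert (Hk' : (0 <= - k)%Z) by lia. destruct (Z_of_nat_complete _ Hk') as [n Hn].
      replace (IZR k) with (- INR n) by (rewrite INR_IZR_INZ, <- Hn, opp_IZR; ring).
      rewrite <- (PerN n (u + - INR n * T)). f_equal. ring. }
  assert (Red : forall t, exists t' c, 0 <= t' <= T /\ t = t' + c /\ forall u, phi (u + c) x0 = phi u x0).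
  { intros t. destruct (archimed (t / T)) as [A1 A2].
    set (k := (up (t / T) - 1)%Z).
    assert (Hk : IZR k = IZR (up (t / T)) - 1) by (unfold k; rewrite minus_IZR; reflexivity).
    assert (Htt : t / T * T = t) by (field; lra).
    exists (t - IZR k * T), (IZR k * T). split; [|split; [ring|intros u; apply PerZ]].
    rewrite Hk. split.
    - assert ((IZR (up (t / T)) - 1) * T <= t / T * T) by (apply Rmult_le_compat_r; lra). lra.
    - assert (t / T * T <= IZR (up (t / T)) * T) by (apply Rmult_le_compat_r; lra). lra. }
  pose proof (comp_cont e (fun t => phi t x0) Hec C1 C2) as Cc.
  destruct (continuity_ab_min (fun t => e (phi t x0)) 0 T ltac:(lra) (fun c _ => Cc c)) as [mx [Hmx _]].
  set (m := e (phi mx x0)).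
  assert (Hm : 0 < m) by apply Hep.
  assert (Hmin : forall t, m <= e (phi t x0)).
  { intros t. destruct (Red t) as [t' [c [Ht' [-> Hc]]]]. rewrite (Rplus_comm t' c).
    rewrite Rplus_comm, Hc. apply Hmx; auto. }
  destruct (@Heine_cor2 (fun t => fst (phi t x0)) 0 (T + 1) (fun x _ => C1 x) (mkposreal (m/2) ltac:(lra))) as [d1 Hd1].
  destruct (@Heine_cor2 (fun t => snd (phi t x0)) 0 (T + 1) (fun x _ => C2 x) (mkposreal (m/2) ltac:(lra))) as [d2 Hd2].
  simpl in Hd1, Hd2.
  exists m, (Rmin 1 (Rmin d1 d2)). split; auto. split; auto.
  split. { apply Rmin_pos; [lra|apply Rmin_pos; apply cond_pos]. }
  intros t s Hs.
  pose proof (Rmin_l 1 (Rmin d1 d2)); pose proof (Rmin_r 1 (Rmin d1 d2)).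
  pose proof (Rmin_l d1 d2); pose proof (Rmin_r d1 d2).
  destruct (Red t) as [t' [c [Ht' [-> Hc]]]].
  replace (t' + c + s) with ((t' + s) + c) by ring. rewrite (Rplus_comm t' c), Rplus_comm, !Hc.
  eapply Rle_lt_trans; [apply edist_le_sum|].
  assert (Rabs (fst (phi t' x0) - fst (phi (t' + s) x0)) < m / 2).
  { apply Hd1; try lra. replace (t' - (t' + s)) with (- s) by ring. rewrite Rabs_Ropp, Rabs_right; lra. }
  assert (Rabs (snd (phi t' x0) - snd (phi (t' + s) x0)) < m / 2).
  { apply Hd2; try lra. replace (t' - (t' + s)) with (- s) by ring. rewrite Rabs_Ropp, Rabs_right; lra. }
  lra.
Qed.

Lemma tri3 a b c : Rabs (a - b) <= Rabs (a - c) + Rabs (b - c).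
Proof.
  replace (a - b) with ((a - c) + - (b - c)) by ring.
  eapply Rle_trans; [apply Rabs_triang|]. rewrite Rabs_Ropp. lra.
Qed.

Lemma conn_ok V phi e x x1 x2 : C1_field V -> is_flow_of V phi -> pos_cont e ->
  (forall y, alpha_lim phi x y <-> y = x1) -> (forall y, omega_lim phi x y <-> y = x2) ->
  exists m sg, 0 < m /\ (forall t, m <= e (phi t x)) /\ 0 < sg /\
  forall t s, 0 < s < sg -> edist (phi t x) (phi (t + s) x) < m.
Proof.
  intros HC HF [Hec Hep] Hal Hom.
  pose proof (flow_sol V phi x HF) as Hsol.
  pose proof (sol_cont1 _ _ Hsol) as C1. pose proof (sol_cont2 _ _ Hsol) as C2.
  simpl in C1, C2.
  assert (C1' : forall t, continuity_pt (fun s => fst (phi (- s) x)) t).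
  { intros t. apply continuity_pt_comp with (f2 := fun s => fst (phi s x)); auto.
    apply continuity_pt_opp, derivable_continuous_pt, derivable_pt_id. }
  assert (C2' : forall t, continuity_pt (fun s => snd (phi (- s) x)) t).
  { intros t. apply continuity_pt_comp with (f2 := fun s => snd (phi s x)); auto.
    apply continuity_pt_opp, derivable_continuous_pt, derivable_pt_id. }
  assert (Fw := conv_lemma (fun t => phi t x) x2 C1 C2 Hom).
  assert (Bw : forall eps, 0 < eps -> exists T, forall t, T <= t -> edist (phi (- t) x) x1 < eps).
  { apply (conv_lemma (fun t => phi (- t) x) x1 C1' C2'). intros y. rewrite <- Hal. split.
    - intros H eps T Heps. destruct (H eps (- T) Heps) as [t [Ht Hd]]. exists (- t).
      split; [lra|]. exact Hd.
    - intros H eps T Heps. destruct (H eps (- T) Heps) as [t [Ht Hd]]. exists (- t).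
      split; [lra|]. rewrite Ropp_involutive. exact Hd. }
  assert (Both : forall eps, 0 < eps -> exists a b, a <= b /\
     (forall t, b <= t -> edist (phi t x) x2 < eps) /\ (forall t, t <= a -> edist (phi t x) x1 < eps)).
  { intros eps Heps. destruct (Fw eps Heps) as [T2 HT2]. destruct (Bw eps Heps) as [T1 HT1].
    exists (Rmin (- T1) T2), (Rmax (- T1) T2). pose proof (Rmin_l (- T1) T2).
    pose proof (Rmin_r (- T1) T2). pose proof (Rmax_l (- T1) T2). pose proof (Rmax_r (- T1) T2).
    split; [lra|]. split.
    - intros t Ht. apply HT2. lra.
    - intros t Ht. replace t with (- - t) by ring. apply HT1. lra. }
  destruct (cont_R2_eps e x1 (Hec x1) (e x1 / 2) ltac:(specialize (Hep x1); lra)) as [d1 [Hd1 E1]].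
  destruct (cont_R2_eps e x2 (Hec x2) (e x2 / 2) ltac:(specialize (Hep x2); lra)) as [d2 [Hd2 E2]].
  destruct (Both (Rmin d1 d2) (Rmin_pos _ _ Hd1 Hd2)) as [a [b [Hab [Hb Ha]]]].
  pose proof (Rmin_l d1 d2); pose proof (Rmin_r d1 d2).
  pose proof (comp_cont e (fun t => phi t x) Hec C1 C2) as Cc.
  destruct (continuity_ab_min (fun t => e (phi t x)) a b Hab (fun c _ => Cc c)) as [mx [Hmx _]].
  set (m := Rmin (e x1 / 2) (Rmin (e x2 / 2) (e (phi mx x)))).
  assert (Hm : 0 < m).
  { unfold m. pose proof (Hep x1); pose proof (Hep x2); pose proof (Hep (phi mx x)).
    repeat apply Rmin_pos; lra. }
  assert (Hml : m <= e x1 / 2 /\ m <= e x2 / 2 /\ m <= e (phi mx x)).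
  { unfold m. pose proof (Rmin_l (e x1 / 2) (Rmin (e x2 / 2) (e (phi mx x)))).
    pose proof (Rmin_r (e x1 / 2) (Rmin (e x2 / 2) (e (phi mx x)))).
    pose proof (Rmin_l (e x2 / 2) (e (phi mx x))). pose proof (Rmin_r (e x2 / 2) (e (phi mx x))). lra. }
  destruct Hml as [Hml1 [Hml2 Hml3]].
  assert (Hmin : forall t, m <= e (phi t x)).
  { intros t. destruct (Rle_dec b t) as [Hbt|Hbt]; [|destruct (Rle_dec t a) as [Hta|Hta]].
    - specialize (Hb t Hbt). pose proof (edist_ge1 (phi t x) x2). pose proof (edist_ge2 (phi t x) x2).
      assert (K1 : Rabs (fst (phi t x) - fst x2) < d2) by lra. assert (K2 : Rabs (snd (phi t x) - snd x2) < d2) by lra. assert (K := E2 (phi t x) K1 K2). assert (K' : Rabs (e (phi t x) - e x2) < e x2 / 2) by (apply K; lra).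
      apply Rabs_def2 in K'. lra.
    - specialize (Ha t Hta). pose proof (edist_ge1 (phi t x) x1). pose proof (edist_ge2 (phi t x) x1).
      assert (K1 : Rabs (fst (phi t x) - fst x1) < d1) by lra. assert (K2 : Rabs (snd (phi t x) - snd x1) < d1) by lra. assert (K := E1 (phi t x) K1 K2). assert (K' : Rabs (e (phi t x) - e x1) < e x1 / 2) by (apply K; lra).
      apply Rabs_def2 in K'. lra.
    - assert (e (phi mx x) <= e (phi t x)) by (apply Hmx; lra). lra. }
  destruct (Both (m / 4) ltac:(lra)) as [a' [b' [Hab' [Hb' Ha']]]].
  destruct (@Heine_cor2 (fun t => fst (phi t x)) (a' - 1) (b' + 1) (fun y _ => C1 y) (mkposreal (m/2) ltac:(lra))) as [h1 Hh1].
  destruct (@Heine_cor2 (fun t => snd (phi t x)) (a' - 1) (b' + 1) (fun y _ => C2 y) (mkposreal (m/2) ltac:(lra))) as [h2 Hh2].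
  simpl in Hh1, Hh2.
  exists m, (Rmin 1 (Rmin h1 h2)). split; auto. split; auto.
  split. { apply Rmin_pos; [lra|apply Rmin_pos; apply cond_pos]. }
  intros t s Hs.
  pose proof (Rmin_l 1 (Rmin h1 h2)); pose proof (Rmin_r 1 (Rmin h1 h2)).
  pose proof (Rmin_l h1 h2); pose proof (Rmin_r h1 h2).
  eapply Rle_lt_trans; [apply edist_le_sum|].
  destruct (Rle_dec b' t) as [Hbt|Hbt]; [|destruct (Rle_dec (t + s) a') as [Hta|Hta]].
  - pose proof (Hb' t Hbt). pose proof (Hb' (t + s) ltac:(lra)).
    pose proof (edist_ge1 (phi t x) x2). pose proof (edist_ge2 (phi t x) x2).
    pose proof (edist_ge1 (phi (t + s) x) x2). pose proof (edist_ge2 (phi (t + s) x) x2).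
    pose proof (tri3 (fst (phi t x)) (fst (phi (t + s) x)) (fst x2)).
    pose proof (tri3 (snd (phi t x)) (snd (phi (t + s) x)) (snd x2)). lra.
  - pose proof (Ha' t ltac:(lra)). pose proof (Ha' (t + s) Hta).
    pose proof (edist_ge1 (phi t x) x1). pose proof (edist_ge2 (phi t x) x1).
    pose proof (edist_ge1 (phi (t + s) x) x1). pose proof (edist_ge2 (phi (t + s) x) x1).
    pose proof (tri3 (fst (phi t x)) (fst (phi (t + s) x)) (fst x1)).
    pose proof (tri3 (snd (phi t x)) (snd (phi (t + s) x)) (snd x1)). lra.
  - assert (Hr : Rabs (t - (t + s)) < Rmin 1 (Rmin h1 h2)).
    { replace (t - (t + s)) with (- s) by ring. rewrite Rabs_Ropp, Rabs_right; lra. }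
    assert (Rabs (fst (phi t x) - fst (phi (t + s) x)) < m / 2) by (apply Hh1; lra).
    assert (Rabs (snd (phi t x) - snd (phi (t + s) x)) < m / 2) by (apply Hh2; lra).
    lra.
Qed.

Theorem mainTheorem16 (f : pt -> pt) (V : pt -> pt) (phi : R -> pt -> pt) :
  TA f -> C1_field V -> is_flow_of V phi -> (forall x, f x = phi 1 x) ->
  (forall x T, 0 < T -> phi T x = x -> singular V x) /\
  (~ exists x x1 x2, finite_connection V phi x x1 x2).
Proof.
  intros [g [[_ [_ [Hgf _]]] [[e [He Hexp]] _]]] HC HF Hf.
  split.
  - intros x T HT HP. apply NNPP. intros Hns.
    destruct (periodic_ok V phi e x T HC HF He HT HP) as [m [sg [Hm [Hmin [Hsg Hcl]]]]].
    exact (key f g V phi e x m sg HC HF Hf Hgf Hexp Hns Hm Hmin Hsg Hcl).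
  - intros [x [x1 [x2 [Hns [_ [_ [Hal Hom]]]]]]].
    destruct (conn_ok V phi e x x1 x2 HC HF He Hal Hom) as [m [sg [Hm [Hmin [Hsg Hcl]]]]].
    exact (key f g V phi e x m sg HC HF Hf Hgf Hexp Hns Hm Hmin Hsg Hcl).
Qed.
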